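(* Let $\mathcal H$ be a real Hilbert space, $T:\mathcal H\rightrightarrows\mathcal H$ maximal monotone, $a,b\ge0$, $\psi(\rho,z):=a\rho^2+b\rho+\big(\rho\|J_{\rho T}(z)-z\|\big)^2$ for $\rho>0$, and let $z\in\mathcal H$ with $0\notin T(z)$. Then: (a) $\psi(\rho,z)>0$ for every $\rho>0$; (b) $\rho\mapsto\psi(\rho,z)$ is strictly increasing and continuous on $(0,\infty)$, with $\psi(\rho,z)\to0$ as $\rho\to0^+$ and $\psi(\rho,z)\to\infty$ as $\rho\to\infty$; (c) for any $0<\theta_-<\theta_+<\infty$, the set of $\rho>0$ with $\theta_-\le\psi(\rho,z)\le\theta_+$ is a closed interval $[\rho_-,\rho_+]$ where $\psi(\rho_-,z)=\theta_-$ and $\psi(\rho_+,z)=\theta_+$, and $\rho_+/\rho_-\ge(\theta_+/\theta_-)^{1/4}$.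
   Context: $J_{\rho T}:=(\rho T+I)^{-1}$ denotes the resolvent of $\rho T$. *)

(* Defs.v *)
From HB Require Import structures.
From mathcomp Require Import all_boot all_order all_algebra.
From mathcomp Require Import all_classical all_reals all_analysis.
Set Implicit Arguments. Unset Strict Implicit. Unset Printing Implicit Defensive.
Import Order.TTheory GRing.Theory Num.Theory.
Import numFieldNormedType.Exports.
Local Open Scope classical_set_scope.
Local Open Scope ring_scope.

(* [ip] is a real inner product on the normed space [H] inducing its norm.
   Together with completeness of [H] this makes [H] a real Hilbert space. *)
Definition is_inner_product (R : realType) (H : normedModType R)
  (ip : H -> H -> R) : Prop :=
  (forall x y, ip x y = ip y x) /\
  (forall (a : R) (x y z : H), ip (a *: x + y) z = a * ip x z + ip y z) /\
  (forall x, ip x x = `|x| ^+ 2).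

Definition monotone_op (R : realType) (H : normedModType R)
  (ip : H -> H -> R) (T : H -> set H) : Prop :=
  forall x y u v, T x u -> T y v -> 0 <= ip (x - y) (u - v).

Definition maximal_monotone (R : realType) (H : normedModType R)
  (ip : H -> H -> R) (T : H -> set H) : Prop :=
  monotone_op ip T /\
  forall S : H -> set H, monotone_op ip S ->
    (forall x u, T x u -> S x u) -> S = T.

(* Resolvent J_{rho T} = (rho T + I)^{-1}: J_{rho T}(z) is the (for maximal
   monotone T and rho > 0, unique, by Minty's theorem) point x with
   z \in rho T(x) + x, i.e. z - x \in rho T(x). *)
Definition resolvent (R : realType) (H : normedModType R)
  (T : H -> set H) (rho : R) (z : H) : H :=
  xget 0 [set x | exists u, T x u /\ z = rho *: u + x].

Definition psi (R : realType) (H : normedModType R) (T : H -> set H)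
  (a b : R) (rho : R) (z : H) : R :=
  a * rho ^+ 2 + b * rho + (rho * `|resolvent T rho z - z|) ^+ 2.

(* Main.v *)
Require Import Defs.
From HB Require Import structures.
From mathcomp Require Import all_boot all_order all_algebra.
From mathcomp Require Import all_classical all_reals all_analysis.
From mathcomp Require Import ring lra.
Import Order.TTheory GRing.Theory Num.Theory.
Import numFieldNormedType.Exports.
Local Open Scope classical_set_scope.
Local Open Scope ring_scope.

Set Implicit Arguments. Unset Strict Implicit.
Section IP.
Context (R : realType) (H : normedModType R) (ip : H -> H -> R)
  (hip : is_inner_product ip).

Lemma ipC x y : ip x y = ip y x.
Proof. by case: hip. Qed.
Lemma ipL a x y z : ip (a *: x + y) z = a * ip x z + ip y z.
Proof. by case: hip => _ []. Qed.
Lemma ipxx x : ip x x = `|x| ^+ 2.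
Proof. by case: hip => _ []. Qed.
Lemma ip0l z : ip 0 z = 0.
Proof.
have := ipL 1 0 0 z; rewrite scaler0 addr0 mul1r => h.
lra.
Qed.

Lemma ipDl x y z : ip (x + y) z = ip x z + ip y z.
Proof. by have := ipL 1 x y z; rewrite scale1r mul1r. Qed.
Lemma ipZl a x z : ip (a *: x) z = a * ip x z.
Proof. by rewrite -(addr0 (a *: x)) ipL ip0l addr0. Qed.
Lemma ipNl x z : ip (- x) z = - ip x z.
Proof. by rewrite -scaleN1r ipZl mulN1r. Qed.
Lemma ipBl x y z : ip (x - y) z = ip x z - ip y z.
Proof. by rewrite ipDl ipNl. Qed.
Lemma ipDr x y z : ip z (x + y) = ip z x + ip z y.
Proof. by rewrite ipC ipDl !(ipC z). Qed.
Lemma ipZr a x z : ip z (a *: x) = a * ip z x.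
Proof. by rewrite ipC ipZl ipC. Qed.
Lemma ipNr x z : ip z (- x) = - ip z x.
Proof. by rewrite ipC ipNl ipC. Qed.
Lemma ipBr x y z : ip z (x - y) = ip z x - ip z y.
Proof. by rewrite ipDr ipNr. Qed.
Lemma ip0r z : ip z 0 = 0.
Proof. by rewrite ipC ip0l. Qed.

Lemma ipCS x y : ip x y <= `|x| * `|y|.
Proof.
set p := `|x|; set q := `|y|.
have h : 0 <= ip (q *: x - p *: y) (q *: x - p *: y) by rewrite ipxx sqr_ge0.
rewrite !(ipBl, ipBr, ipZl, ipZr) !ipxx -/p -/q (ipC y x) in h.
have p0 : 0 <= p by apply: normr_ge0.
have q0 : 0 <= q by apply: normr_ge0.
have [pq0|pq0] := eqVneq (p * q) 0.
  move/eqP: pq0; rewrite mulf_eq0 => /orP[] /eqP /normr0_eq0 e.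
    by rewrite e ip0l mulr_ge0.
  by rewrite e ip0r mulr_ge0.
have pqp : 0 < p * q by rewrite lt_def pq0 mulr_ge0.
have : 0 <= (p * q) * (p * q - ip x y) by nra.
by rewrite pmulr_rge0 // subr_ge0.
Qed.

Lemma ipCSa x y : `|ip x y| <= `|x| * `|y|.
Proof.
rewrite ler_norml ipCS andbT lerNl -ipNl -(normrN x); exact: ipCS.
Qed.
End IP.

Section Minty.
Context (R : realType) (H : completeNormedModType R) (ip : H -> H -> R)
  (hip : is_inner_product ip).

Definition maxP (T : H -> set H) := monotone_op ip T /\
  forall x0 u0, (forall x u, T x u -> 0 <= ip (x - x0) (u - u0)) -> T x0 u0.

Definition Bnd (T : H -> set H) x u c := forall y v, T y v ->
  ip x v + ip y u - ip y v + (`|x| ^+ 2 + `|u| ^+ 2) / 2 <= c.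

Lemma nrm_comb (t : R) (x y : H) : `|(1 - t) *: x + t *: y| ^+ 2 =
  (1 - t) * `|x| ^+ 2 + t * `|y| ^+ 2 - t * (1 - t) * `|x - y| ^+ 2.
Proof.
rewrite -!(ipxx hip) !(ipDl hip, ipDr hip, ipBl hip, ipBr hip, ipZl hip, ipZr hip, ipNl hip, ipNr hip).
rewrite (ipC hip y x); ring.
Qed.

Lemma Bnd_comb T (xa ua : H) (ca : R) (xb ub : H) (cb t : R) : Bnd T xa ua ca -> Bnd T xb ub cb ->
  0 <= t <= 1 ->
  Bnd T ((1 - t) *: xa + t *: xb) ((1 - t) *: ua + t *: ub)
    ((1 - t) * ca + t * cb - t * (1 - t) * (`|xa - xb| ^+ 2 + `|ua - ub| ^+ 2) / 2).
Proof.
move=> ha hb /andP[t0 t1] y v Tyv.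
have := ha _ _ Tyv; have := hb _ _ Tyv.
rewrite !nrm_comb !(ipDl hip, ipDr hip, ipZl hip, ipZr hip, ipNl hip, ipNr hip) => h1 h2.
have e1 : 0 <= 1 - t by lra.
set A := ip xa v + ip y ua - ip y v + (`|xa| ^+ 2 + `|ua| ^+ 2) / 2 in h2.
set B := ip xb v + ip y ub - ip y v + (`|xb| ^+ 2 + `|ub| ^+ 2) / 2 in h1.
have : (1 - t) * A + t * B <= (1 - t) * ca + t * cb.
  by apply: lerD; apply: ler_wpM2l.
rewrite /A /B; nra.
Qed.

Lemma Bnd_graph T (y v : H) : monotone_op ip T -> T y v ->
  Bnd T y v (ip y v + (`|y| ^+ 2 + `|v| ^+ 2) / 2).
Proof.
move=> mon Tyv y' v' Ty'v'; have := mon _ _ _ _ Tyv Ty'v'.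
rewrite !(ipBl hip, ipBr hip); lra.
Qed.

Lemma Bnd_low T (x u : H) (c : R) : maxP T -> Bnd T x u c ->
  ip x u + (`|x| ^+ 2 + `|u| ^+ 2) / 2 <= c.
Proof.
move=> [mon mx] hb.
have [[y [v [Tyv h]]]|] := pselect (exists y v, T y v /\ ip (x - y) (u - v) <= 0).
  have := hb _ _ Tyv; move: h.
  rewrite !(ipBl hip, ipBr hip) (ipC hip y u); lra.
move=> hn; have Txu : T x u.
  apply: mx => y v Tyv; rewrite -(opprB x y) -(opprB u v) (ipNl hip) (ipNr hip) opprK.
  rewrite leNgt; apply/negP => h; apply: hn; exists y, v; split => //; exact: ltW.
have := hb _ _ Txu; lra.
Qed.

End Minty.

Section Minty2.
Context (R : realType) (H : completeNormedModType R) (ip : H -> H -> R)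
  (hip : is_inner_product ip).

Lemma ip_cvgl (x : nat -> H) (p v : H) : x n @[n --> \oo] --> p ->
  ip (x n) v @[n --> \oo] --> ip p v.
Proof.
move=> /cvgrPdist_lt h; apply/cvgrPdist_lt => e e0.
have he : 0 < e / (`|v| + 1) by rewrite divr_gt0 // ltr_wpDl.
apply: filterS (h _ he) => n hn.
rewrite -(ipBl hip); apply: le_lt_trans (ipCSa hip _ _) _.
have v0 : 0 <= `|v| by [].
have : `|p - x n| * `|v| <= e / (`|v| + 1) * `|v|.
  by apply: ler_wpM2r => //; apply: ltW.
move=> h1; apply: le_lt_trans h1 _.
rewrite mulrAC ltr_pdivrMr ?ltr_wpDl //; nra.
Qed.

Lemma ip_cvgr (x : nat -> H) (p v : H) : x n @[n --> \oo] --> p ->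
  ip v (x n) @[n --> \oo] --> ip v p.
Proof.
move=> h; rewrite (ipC hip v p).
have -> : (fun n => ip v (x n)) = (fun n => ip (x n) v).
  by apply: funext => n; rewrite ipC.
exact: ip_cvgl.
Qed.

Lemma cvg_sq (f : nat -> R) (a : R) : f n @[n --> \oo] --> a ->
  f n ^+ 2 @[n --> \oo] --> a ^+ 2.
Proof. move=> hf; exact: (cvgM hf hf). Qed.


Lemma Bnd_mono T (x u : H) (c c' : R) : Bnd ip T x u c -> c <= c' -> Bnd ip T x u c'.
Proof. by move=> hb hc y v Tyv; apply: le_trans (hb _ _ Tyv) hc. Qed.

Lemma minty T : maxP ip T -> exists x, T x (- x).
Proof.
move=> hT; have [mon mx] := hT.
have [y0 [v0 T0]] : exists y v, T y v.
  case: (pselect (exists y v, T y v)) => // hn.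
  have T00 : T 0 0 by apply: mx => x u Txu; exfalso; apply: hn; exists x, u.
  by exists 0, 0.
pose C := [set c | exists x u, Bnd ip T x u c].
have C0 : C (ip y0 v0 + (`|y0| ^+ 2 + `|v0| ^+ 2) / 2).
  by exists y0, v0; exact: Bnd_graph.
have lbC : lbound C 0.
  move=> c [x [u hb]]; have := Bnd_low hip hT hb.
  have := ipCSa hip x u; rewrite ler_norml => /andP[h1 _].
  have := sqr_ge0 (`|x| - `|u|); nra.
have hC : has_inf C by split; [exists (ip y0 v0 + (`|y0| ^+ 2 + `|v0| ^+ 2) / 2)|exists 0].
set m := inf C.
have infC : forall c, C c -> m <= c by move=> c Cc; apply: ge_inf => //; exists 0.
have inC : forall x u c, Bnd ip T x u c -> m <= c.
  by move=> x u c hb; apply: infC; exists x, u.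
have seq : forall n, exists xu : H * H, Bnd ip T xu.1 xu.2 (m + harmonic n).
  move=> n; have [c [x [u hb]] hc] := inf_adherent (harmonic_gt0 n) hC.
  by exists (x, u); apply: Bnd_mono hb _; exact: ltW.
have [s hs] := choice seq.
pose x n := (s n).1; pose u n := (s n).2.
have cau : forall n k, `|x n - x k| ^+ 2 + `|u n - u k| ^+ 2 <= 4 * (harmonic n + harmonic k).
  move=> n k.
  have h2a : (0 : R) <= 2^-1 by lra.
  have h2b : (2^-1 : R) <= 1 by lra.
  have h2 : 0 <= (2^-1 : R) <= 1 by rewrite h2a h2b.
  have hb := Bnd_comb hip (hs n) (hs k) h2; have := inC _ _ _ hb.
  rewrite /x /u; lra.
have hh : forall e : R, 0 < e -> exists N, forall n, (N <= n)%N -> harmonic n < e.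
  move=> e e0; have := @cvg_harmonic R; move/cvgrPdist_lt/(_ e e0) => [N _ hN].
  exists N => n hn; have := hN n hn; rewrite /= sub0r normrN ger0_norm //.
have sqlt : forall d e : R, 0 <= d -> 0 < e -> d ^+ 2 < e ^+ 2 -> d < e.
  by move=> d e d0 e0 hd; rewrite ltNge; apply/negP => he; nra.
have cx : cvg (x n @[n --> \oo]).
  apply: cauchy_cvg; apply: cauchy_exP => e e0.
  have [N hN] := hh (e ^+ 2 / 8) ltac:(by rewrite divr_gt0 // exprn_gt0).
  exists (x N); exists N => // n hn /=; rewrite -ball_normE /=.
  apply: sqlt => //; have := cau N n; have := hN N (leqnn N); have := hN n hn.
  have := sqr_ge0 `|u N - u n|; lra.
have cu : cvg (u n @[n --> \oo]).
  apply: cauchy_cvg; apply: cauchy_exP => e e0.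
  have [N hN] := hh (e ^+ 2 / 8) ltac:(by rewrite divr_gt0 // exprn_gt0).
  exists (u N); exists N => // n hn /=; rewrite -ball_normE /=.
  apply: sqlt => //; have := cau N n; have := hN N (leqnn N); have := hN n hn.
  have := sqr_ge0 `|x N - x n|; lra.
set p := lim (x n @[n --> \oo]) in cx.
set q := lim (u n @[n --> \oo]) in cu.
have Bpq : Bnd ip T p q m.
  move=> y v Tyv.
  have l1 : (ip (x n) v + ip y (u n) - ip y v + (`|x n| ^+ 2 + `|u n| ^+ 2) / 2)
     @[n --> \oo] --> (ip p v + ip y q - ip y v + (`|p| ^+ 2 + `|q| ^+ 2) / 2).
    apply: cvgD; first apply: cvgB; first apply: cvgD.
    - exact: ip_cvgl.
    - exact: ip_cvgr.
    - exact: cvg_cst.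
    apply: cvgMl; apply: cvgD; apply: cvg_sq; exact: cvg_norm.
  have l2 : (m + harmonic n) @[n --> \oo] --> m.
    rewrite -[X in _ --> X]addr0; apply: cvgD; [exact: cvg_cst | exact: cvg_harmonic].
  apply: (ler_cvg_to l1 l2); apply: nearW => n; exact: (hs n y v Tyv).
have lowpq := Bnd_low hip hT Bpq.
have key : forall y v, T y v -> ip p q + (`|p| ^+ 2 + `|q| ^+ 2) / 2 +
    (`|p - y| ^+ 2 + `|q - v| ^+ 2) / 2 <= ip y v + (`|y| ^+ 2 + `|v| ^+ 2) / 2.
  move=> y v Tyv.
  suff : m <= ip y v + (`|y| ^+ 2 + `|v| ^+ 2) / 2 - (`|p - y| ^+ 2 + `|q - v| ^+ 2) / 2.
    by move: lowpq; lra.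
  apply/ler_addgt0Pr => e e0.
  set D := `|p - y| ^+ 2 + `|q - v| ^+ 2.
  set cb := ip y v + (`|y| ^+ 2 + `|v| ^+ 2) / 2.
  have D0 : 0 <= D by rewrite addr_ge0 // sqr_ge0.
  pose t := e / (e + D).
  have eD : 0 < e + D by lra.
  have tD : t * (e + D) = e by rewrite /t divfK // gt_eqF.
  have t0 : 0 < t by rewrite /t divr_gt0.
  have t1 : t <= 1 by rewrite /t ler_pdivrMr // mul1r; lra.
  have ht : 0 <= t <= 1 by rewrite ltW.
  have := inC _ _ _ (Bnd_comb hip Bpq (Bnd_graph hip mon Tyv) ht).
  rewrite -/D -/cb => hm.
  have : t * (m - (cb - (1 - t) * D / 2)) <= 0 by nra.
  rewrite pmulr_rle0 // subr_le0 => hm2.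
  nra.
have pq0 : 0 <= ip p p + 2 * ip p q + ip q q.
  have := sqr_ge0 `|p + q|; rewrite -(ipxx hip) !(ipDl hip, ipDr hip) (ipC hip q p); lra.
have Tqp : T (- q) (- p).
  apply: mx => y v Tyv; have := key _ _ Tyv.
  rewrite -!(ipxx hip) !(ipDl hip, ipDr hip, ipBl hip, ipBr hip, ipNl hip, ipNr hip) opprK.
  rewrite (ipC hip y p) (ipC hip v q) (ipC hip q p); lra.
have := key _ _ Tqp.
rewrite -!(ipxx hip) !(ipDl hip, ipDr hip, ipBl hip, ipBr hip, ipNl hip, ipNr hip) !opprK.
rewrite (ipC hip q p) => h.
have : `|p + q| ^+ 2 <= 0.
  rewrite -(ipxx hip) !(ipDl hip, ipDr hip) (ipC hip q p); lra.
move=> hle; have : `|p + q| ^+ 2 == 0 by rewrite eq_le hle sqr_ge0.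
rewrite sqrf_eq0 normr_eq0 addr_eq0 => /eqP pq.
by exists p; rewrite {1}pq.
Qed.
End Minty2.

Section Res.
Context (R : realType) (H : completeNormedModType R) (ip : H -> H -> R)
  (hip : is_inner_product ip).

Lemma maxP_of T : maximal_monotone ip T -> maxP ip T.
Proof.
move=> [mon mx]; split => // x0 u0 h.
pose S x u := T x u \/ (x = x0 /\ u = u0).
have monS : monotone_op ip S.
  move=> x y u v [Txu|[-> ->]] [Tyv|[-> ->]].
  - exact: mon.
  - exact: h.
  - by rewrite -(opprB y x0) -(opprB v u0) (ipNl hip) (ipNr hip) opprK; apply: h.
  - by rewrite subrr (ip0l hip).
have := mx S monS (fun x u Txu => or_introl Txu) => eST.
by rewrite -eST; right.
Qed.

Lemma res_ex T (hT : maxP ip T) (rho : R) (z : H) : 0 < rho ->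
  exists x, T x (rho^-1 *: (z - x)).
Proof.
move=> r0; have [mon mx] := hT.
pose T' w y := T (w + z) (rho^-1 *: y).
have hT' : maxP ip T'.
  split.
    move=> w1 w2 y1 y2 h1 h2; have := mon _ _ _ _ h1 h2.
    rewrite -scalerBr (ipZr hip) opprD addrACA subrr addr0 pmulr_rge0 //.
    by rewrite invr_gt0.
  move=> w0 y0 h; apply: mx => x u Txu.
  have := h (x - z) (rho *: u); rewrite /T' subrK scalerA mulVf ?gt_eqF // scale1r.
  move=> /(_ Txu) h1.
  have e2 : u - rho^-1 *: y0 = rho^-1 *: (rho *: u - y0).
    by rewrite scalerBr scalerA mulVf ?gt_eqF // scale1r.
  have e1 : x - (w0 + z) = x - z - w0 by rewrite opprD addrA addrAC.
  by rewrite e1 e2 (ipZr hip) mulr_ge0 // invr_ge0 ltW.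
have [w Tw] := minty hip hT'.
exists (w + z); move: Tw; rewrite /T'.
by rewrite opprD addrA addrAC subrr sub0r.
Qed.

Lemma res_spec T (hT : maxP ip T) (rho : R) (z : H) : 0 < rho ->
  T (resolvent T rho z) (rho^-1 *: (z - resolvent T rho z)).
Proof.
move=> r0; have [x Tx] := res_ex hT z r0.
have : [set x | exists u, T x u /\ z = rho *: u + x] (resolvent T rho z).
  apply: xgetPex; exists x; exists (rho^-1 *: (z - x)); split => //.
  by rewrite scalerA mulfV ?gt_eqF // scale1r subrK.
move=> [u [Tu ez]]; suff -> : rho^-1 *: (z - resolvent T rho z) = u by [].
by rewrite {1}ez addrK scalerA mulVf ?gt_eqF // scale1r.
Qed.

Definition dd T (z : H) (r : R) := `|resolvent T r z - z|.

Lemma dd_gt0 T (hT : maxP ip T) (z : H) (r : R) : ~ T z 0 -> 0 < r -> 0 < dd T z r.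
Proof.
move=> hz r0; rewrite /dd normr_gt0; apply/negP => /eqP e.
have e' : resolvent T r z = z by apply/eqP; rewrite -subr_eq0 e.
have := res_spec hT z r0; rewrite e' subrr scaler0.
exact: hz.
Qed.

Lemma dd_mono T (hT : maxP ip T) (z : H) (r1 r2 : R) : ~ T z 0 -> 0 < r1 -> r1 <= r2 ->
  dd T z r1 <= dd T z r2 /\ r1 * dd T z r2 <= r2 * dd T z r1.
Proof.
move=> hz p1 r12; have p2 : 0 < r2 by apply: lt_le_trans r12.
have T1 := res_spec hT z p1; have T2 := res_spec hT z p2.
have d1 := dd_gt0 hT hz p1; have d2 := dd_gt0 hT hz p2.
set J1 := resolvent T r1 z in T1 d1 *; set J2 := resolvent T r2 z in T2 d2 *.
set u1 := r1^-1 *: (z - J1) in T1; set u2 := r2^-1 *: (z - J2) in T2.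
have eJ1 : J1 - z = - (r1 *: u1) by rewrite /u1 scalerA mulfV ?gt_eqF // scale1r opprB.
have eJ2 : J2 - z = - (r2 *: u2) by rewrite /u2 scalerA mulfV ?gt_eqF // scale1r opprB.
have eJ : J1 - J2 = r2 *: u2 - r1 *: u1.
  by rewrite -(subrKA z) eJ1 -opprB eJ2 opprK addrC.
have := (proj1 hT) _ _ _ _ T1 T2; rewrite eJ.
move: d1 d2; rewrite /dd -/J1 -/J2 eJ1 eJ2.
clearbody u1 u2 J1 J2.
rewrite !normrN !normrZ !gtr0_norm //.
rewrite !(ipBl hip, ipBr hip, ipZl hip, ipZr hip) !(ipxx hip) (ipC hip u2 u1).
have := ipCS hip u1 u2.
set a := `|u1|; set b := `|u2|; set c := ip u1 u2 => hc d1 d2 hm.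
have a0 : 0 < a by rewrite -(pmulr_rgt0 _ p1).
have b0 : 0 < b by rewrite -(pmulr_rgt0 _ p2).
have key : (a - b) * (r1 * a - r2 * b) <= 0 by nra.
have ba : b <= a.
  rewrite leNgt; apply/negP => ab.
  have : 0 <= r1 * a - r2 * b.
    rewrite leNgt; apply/negP => h.
    have : 0 < (a - b) * (r1 * a - r2 * b) by rewrite nmulr_rgt0 // subr_lt0.
    lra.
  have : r1 * a < r1 * b by rewrite ltr_pM2l.
  have : r1 * b <= r2 * b by apply: ler_wpM2r => //; exact: ltW.
  lra.
have r12p : 0 < r1 * r2 by rewrite mulr_gt0.
split; last first.
  have : r1 * r2 * b <= r1 * r2 * a by apply: ler_wpM2l => //; exact: ltW.
  lra.
have [eab|nab] := eqVneq a b.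
  by rewrite -eab; apply: ler_wpM2r => //; exact: ltW.
have ab : b < a by rewrite lt_def nab ba.
rewrite leNgt; apply/negP => h.
have : 0 < (a - b) * (r1 * a - r2 * b) by rewrite pmulr_rgt0 ?subr_gt0.
lra.
Qed.
End Res.

Unset Implicit Arguments. Set Strict Implicit.

Theorem lemma5p6 (R : realType) (H : completeNormedModType R)
  (ip : H -> H -> R) (T : H -> set H) (a b : R) (z : H) :
  is_inner_product ip -> maximal_monotone ip T ->
  0 <= a -> 0 <= b -> ~ T z 0 ->
  (* (a) *)
  (forall rho : R, 0 < rho -> 0 < psi T a b rho z) /\
  (* (b) *)
  (forall r1 r2 : R, 0 < r1 -> r1 < r2 -> psi T a b r1 z < psi T a b r2 z) /\
  (forall r : R, 0 < r -> {for r, continuous (fun rho => psi T a b rho z)}) /\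
  (psi T a b rho z @[rho --> 0^'+] --> 0) /\
  (psi T a b rho z @[rho --> +oo] --> +oo) /\
  (* (c) *)
  (forall thm thp : R, 0 < thm -> thm < thp ->
     exists rm rp : R,
       [set rho : R | 0 < rho /\ thm <= psi T a b rho z <= thp] = `[rm, rp]%classic /\
       0 < rm /\ rm <= rp /\
       psi T a b rm z = thm /\ psi T a b rp z = thp /\
       (thp / thm) `^ (4^-1) <= rp / rm).
Proof.
move=> hip hmm a0 b0 hz.
have hT := maxP_of hip hmm.
pose d := dd T z.
have Pe : forall r, psi T a b r z = a * r ^+ 2 + b * r + (r * d r) ^+ 2 by [].
have dpos : forall r, 0 < r -> 0 < d r := fun r => @dd_gt0 _ _ _ hip _ hT z r hz.
have dmon : forall r1 r2, 0 < r1 -> r1 <= r2 -> d r1 <= d r2 /\ r1 * d r2 <= r2 * d r1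
  := fun r1 r2 => @dd_mono _ _ _ hip _ hT z r1 r2 hz.
have Ppos : forall r, 0 < r -> 0 < psi T a b r z.
  move=> r r0; rewrite Pe; have := dpos r r0.
  have : 0 < (r * d r) ^+ 2 by apply: exprn_gt0; apply: mulr_gt0 => //; exact: dpos.
  nra.
have Pstr : forall r1 r2, 0 < r1 -> r1 < r2 -> psi T a b r1 z < psi T a b r2 z.
  move=> r1 r2 p1 r12; rewrite !Pe.
  have [m1 _] := dmon _ _ p1 (ltW r12).
  have d1 := dpos _ p1.
  have h1 : r1 * d r1 < r2 * d r2.
    apply: lt_le_trans (_ : r2 * d r1 <= _); first by rewrite ltr_pM2r.
    by apply: ler_wpM2l => //; apply: ltW; apply: lt_trans r12.
  have h2 : (r1 * d r1) ^+ 2 < (r2 * d r2) ^+ 2.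
    have p2 : 0 < r2 by apply: lt_trans r12.
    rewrite ltr_pXn2r //; apply: mulr_ge0; apply: ltW => //; exact: dpos.
  have h3 : r1 ^+ 2 <= r2 ^+ 2 by rewrite ler_pXn2r // ?nnegrE ltW // (lt_trans p1 r12).
  have : a * r1 ^+ 2 <= a * r2 ^+ 2 by exact: ler_wpM2l.
  have : b * r1 <= b * r2 by apply: ler_wpM2l => //; exact: ltW.
  lra.
have Pmon : forall r1 r2, 0 < r1 -> r1 <= r2 -> psi T a b r1 z <= psi T a b r2 z.
  move=> r1 r2 p1; rewrite le_eqVlt => /orP[/eqP -> //|h]; exact/ltW/Pstr.
have dcont : forall r : R, 0 < r -> d t @[t --> r] --> d r.
  move=> r r0; apply/cvgrPdist_lt => e e0.
  have /cvgrPdist_lt hid : t @[t --> r] --> r := cvg_id.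
  set D := d r; have D0 : 0 < D := dpos r r0.
  pose del := e * r / (2 * D + 1).
  have D1 : 0 < 2 * D + 1 by lra.
  have del0 : 0 < del by rewrite /del divr_gt0 // mulr_gt0.
  have hdel : del * (2 * D + 1) = e * r by rewrite /del divfK // gt_eqF.
  have r20 : 0 < r / 2 by rewrite divr_gt0.
  apply: filterS2 (hid _ r20) (hid _ del0) => t h1 h2.
  rewrite ltr_norml in h1; rewrite ltr_norml in h2.
  move/andP: h1 => [h1a h1b]; move/andP: h2 => [h2a h2b].
  have t0 : 0 < t by lra.
  have er0 : 0 < e * r by rewrite mulr_gt0.
  have [rt|tr] := leP r t.
    have [m1 m2] := dmon r t r0 rt; rewrite -/D in m1 m2.
    rewrite ler0_norm ?subr_le0 // opprB.
    have h3 : (t - r) * D <= del * D by apply: ler_wpM2r; [exact: ltW|lra].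
    have : r * (d t - D) < r * e by nra.
    by rewrite ltr_pM2l.
  have [m1 m2] := dmon t r t0 (ltW tr); rewrite -/D in m1 m2.
  rewrite ger0_norm ?subr_ge0 //.
  have h3 : (r - t) * D <= del * D by apply: ler_wpM2r; [exact: ltW|lra].
  have h4 : (r - t) * d t <= (r - t) * D by apply: ler_wpM2l => //; lra.
  have h5 : r / 2 * (D - d t) <= t * (D - d t) by apply: ler_wpM2r; lra.
  have : r / 2 * (D - d t) < r / 2 * e by nra.
  by rewrite ltr_pM2l.
have Pcont : forall r : R, 0 < r -> {for r, continuous (fun rho => psi T a b rho z)}.
  move=> r r0.
  have h : (a * t ^+ 2 + b * t + (t * d t) ^+ 2) @[t --> r] -->
           (a * r ^+ 2 + b * r + (r * d r) ^+ 2).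
    apply: cvgD; first apply: cvgD.
    - apply: cvgM; first exact: cvg_cst.
      exact: (cvgM cvg_id cvg_id).
    - apply: cvgM; first exact: cvg_cst.
      exact: cvg_id.
    - apply: cvgM; apply: cvgM; (exact: cvg_id || exact: dcont).
  exact: h.
have lim0 : psi T a b rho z @[rho --> 0^'+] --> 0.
  pose K := a + b + d 1 ^+ 2.
  apply: (@squeeze_cvgr _ _ _ _ (fun=> 0) (fun t => t * K)).
    apply: filterS2 (nbhs_right_gt 0) (nbhs_right_le (@ltr01 R)) => t t0 t1.
    rewrite Pe; have [m1 _] := dmon t 1 t0 t1.
    have dt0 := dpos t t0.
    have h1 : (t * d t) ^+ 2 <= t * d 1 ^+ 2.
      have : t * d t <= t * d 1 by rewrite ler_pM2l.
      have : 0 <= t * d t by rewrite mulr_ge0 // ltW.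
      nra.
    apply/andP; split.
      by have := Ppos t t0; rewrite Pe => /ltW.
    have : t ^+ 2 <= t by rewrite expr2 ger_pMl.
    move=> h2; have : a * t ^+ 2 <= a * t by exact: ler_wpM2l.
    rewrite /K; lra.
  - exact: cvg_cst.
  - rewrite -[X in _ --> X](mul0r K); apply: cvgMl.
    apply: cvg_at_right_filter; exact: cvg_id.
have limoo : psi T a b rho z @[rho --> +oo] --> +oo.
  apply/cvgryPge => A.
  have d10 := dpos 1 ltr01.
  have d120 : 0 < d 1 ^+ 2 by rewrite exprn_gt0.
  exists (Num.max 1 (A / d 1 ^+ 2)); split; first exact: num_real.
  move=> x; rewrite gt_max => /andP[x1 xA].
  have x0 : 0 < x by apply: lt_trans x1.
  have [m1 _] := dmon 1 x ltr01 (ltW x1).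
  rewrite Pe.
  have h1 : x * d 1 <= x * d x by rewrite ler_pM2l.
  have h2 : (x * d 1) ^+ 2 <= (x * d x) ^+ 2.
    have : 0 <= x * d 1 by rewrite mulr_ge0 // ltW.
    nra.
  have h3 : x * d 1 ^+ 2 <= (x * d 1) ^+ 2.
    by rewrite exprMn ler_pM2r // expr2 ler_pMr // ltW.
  have h4 : A < x * d 1 ^+ 2 by rewrite -ltr_pdivrMr.
  have : 0 <= a * x ^+ 2 by rewrite mulr_ge0 // sqr_ge0.
  have : 0 <= b * x by rewrite mulr_ge0 // ltW.
  lra.
have rat : forall r1 r2, 0 < r1 -> r1 <= r2 ->
    r1 ^+ 4 * psi T a b r2 z <= r2 ^+ 4 * psi T a b r1 z.
  move=> r1 r2 p1 r12; have p2 : 0 < r2 by apply: lt_le_trans r12.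
  have [m1 m2] := dmon r1 r2 p1 r12.
  have d1 := dpos r1 p1; have d2 := dpos r2 p2.
  rewrite !Pe.
  have s2 : r1 ^+ 2 <= r2 ^+ 2 by rewrite ler_pXn2r // ?nnegrE ltW.
  have s3 : r1 ^+ 3 <= r2 ^+ 3 by rewrite ler_pXn2r // ?nnegrE ltW.
  have s4 : (r1 * d r2) ^+ 2 <= (r2 * d r1) ^+ 2.
    rewrite ler_pXn2r // ?nnegrE mulr_ge0 // ltW //; exact: dpos.
  have c1 : 0 <= a * r1 ^+ 2 * r2 ^+ 2.
    by apply: mulr_ge0; [apply: mulr_ge0 => //|]; apply: sqr_ge0.
  have c2 : 0 <= b * r1 * r2 by rewrite !mulr_ge0 // ltW.
  have c3 : 0 <= r1 ^+ 2 * r2 ^+ 2 by rewrite mulr_ge0 // ?sqr_ge0.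
  have t1 : a * r1 ^+ 2 * r2 ^+ 2 * r1 ^+ 2 <= a * r1 ^+ 2 * r2 ^+ 2 * r2 ^+ 2
    by exact: ler_wpM2l.
  have t2 : b * r1 * r2 * r1 ^+ 3 <= b * r1 * r2 * r2 ^+ 3 by exact: ler_wpM2l.
  have t3 : r1 ^+ 2 * r2 ^+ 2 * (r1 * d r2) ^+ 2 <= r1 ^+ 2 * r2 ^+ 2 * (r2 * d r1) ^+ 2
    by exact: ler_wpM2l.
  have e1 : r1 ^+ 4 * (a * r2 ^+ 2 + b * r2 + (r2 * d r2) ^+ 2) =
    a * r1 ^+ 2 * r2 ^+ 2 * r1 ^+ 2 + b * r1 * r2 * r1 ^+ 3 +
    r1 ^+ 2 * r2 ^+ 2 * (r1 * d r2) ^+ 2 by ring.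
  have e2 : r2 ^+ 4 * (a * r1 ^+ 2 + b * r1 + (r1 * d r1) ^+ 2) =
    a * r1 ^+ 2 * r2 ^+ 2 * r2 ^+ 2 + b * r1 * r2 * r2 ^+ 3 +
    r1 ^+ 2 * r2 ^+ 2 * (r2 * d r1) ^+ 2 by ring.
  rewrite e1 e2; lra.
split => //; split => //; split => //; split => //; split => //.
move=> thm thp thm0 thmp; have thp0 : 0 < thp by apply: lt_trans thmp.
have [r0 [r00 hr0]] : exists r, 0 < r /\ psi T a b r z < thm.
  move/cvgrPdist_lt: lim0 => /(_ thm thm0) h0.
  have hF : \forall t \near 0^'+, 0 < t /\ psi T a b t z < thm.
    apply: filterS2 (nbhs_right_gt 0) h0 => t t0; rewrite sub0r normrN => h.
    by split => //; apply: le_lt_trans (ler_norm _) h.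
  exact: filter_ex hF.
have [r1 [r01 hr1]] : exists r, r0 < r /\ thp < psi T a b r z.
  move/cvgryPgt: limoo => /(_ thp) [M [_ hM]].
  exists (Num.max (M + 1) (r0 + 1)); split.
    by rewrite lt_max; apply/orP; right; lra.
  by apply: hM; rewrite lt_max; apply/orP; left; lra.
have r10 : 0 < r1 by apply: lt_trans r01.
have cont : {within `[r0, r1], continuous (fun t => psi T a b t z)}.
  apply: continuous_in_subspaceT => t; rewrite inE /= in_itv /= => /andP[ht _].
  by apply: Pcont; apply: lt_le_trans ht.
have P01 : psi T a b r0 z <= psi T a b r1 z by apply: Pmon => //; exact: ltW.
have [rm rmI Prm] : exists2 c, c \in `[r0, r1] & psi T a b c z = thm.
  apply: IVT => //; first exact: ltW.
  apply/andP; split.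
    by rewrite ge_min; apply/orP; left; exact: ltW.
  by rewrite le_max; apply/orP; right; lra.
have [rp rpI Prp] : exists2 c, c \in `[r0, r1] & psi T a b c z = thp.
  apply: IVT => //; first exact: ltW.
  apply/andP; split.
    by rewrite ge_min; apply/orP; left; lra.
  by rewrite le_max; apply/orP; right; exact: ltW.
move: rmI rpI; rewrite !in_itv /= => /andP[rm0 _] /andP[rp0 _].
have rmp : 0 < rm by apply: lt_le_trans rm0.
have rpp : 0 < rp by apply: lt_le_trans rp0.
have rmrp : rm <= rp.
  rewrite leNgt; apply/negP => h; have := Pstr _ _ rpp h; lra.
exists rm, rp; split.
  apply/seteqP; split => t /=.
    move=> [t0 /andP[h1 h2]]; rewrite in_itv /=; apply/andP; split.
      rewrite leNgt; apply/negP => h; have := Pstr _ _ t0 h; lra.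
    rewrite leNgt; apply/negP => h; have := Pstr _ _ rpp h; lra.
  rewrite in_itv /= => /andP[h1 h2]; have t0 : 0 < t by apply: lt_le_trans h1.
  split => //; apply/andP; split.
    by rewrite -Prm; apply: Pmon.
  by rewrite -Prp; apply: Pmon.
do 4 (split => //).
have := rat _ _ rmp rmrp; rewrite Prm Prp => hr.
have q0 : 0 <= rp / rm by rewrite divr_ge0 // ltW.
have hq : thp / thm <= (rp / rm) ^+ 4.
  rewrite expr_div_n ler_pdivlMr ?exprn_gt0 // mulrAC ler_pdivrMr //.
  by rewrite mulrC.
have -> : rp / rm = ((rp / rm) ^+ 4) `^ 4^-1.
  rewrite -powR_mulrn // -powRrM mulfV ?pnatr_eq0 // powRr1 //.
apply: ge0_ler_powR => //.
  by rewrite nnegrE divr_ge0 // ltW.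
by rewrite nnegrE exprn_ge0.
Qed.
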